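(* Let $s\geq 2$ and let $n_1>n_2>\cdots>n_s\geq 2$ be integers, and $S=\{n_1,\ldots,n_s\}$. Let $\delta_3(S)$ denote the minimum number of vertices of a $3$-uniform bi-hypergraph $\mathcal H=(X,\mathcal B)$ which is a one-realization of $S$. Then $\delta_3(S)\geq 2n_1-\left\lfloor \frac{n_2+1}{n_1}\right\rfloor$.
   Context: A bi-hypergraph is a pair $\mathcal H=(X,\mathcal B)$ with $X$ finite and $\mathcal B$ a family of subsets of $X$ (each member serving simultaneously as a $\mathcal C$-edge and a $\mathcal D$-edge); it is $3$-uniform if every member of $\mathcal B$ has exactly $3$ elements. A strict $k$-coloring is a partition of $X$ into exactly $k$ nonempty classes such that every edge of $\mathcal B$ contains two vertices of a common class and two vertices of distinct classes. The feasible set $\Phi(\mathcal H)$ is the set of $k$ admitting a strict $k$-coloring. The chromatic spectrum is $(r_1,\ldots,r_{\bar\chi})$ with $r_k$ the number of strict $k$-colorings (as partitions) and $\bar\chi=\max\Phi(\mathcal H)$. $\mathcal H$ is a one-realization of $S$ if $\Phi(\mathcal H)=S$ and each $r_k\in\{0,1\}$. *)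

(* Defs.v *)
From mathcomp Require Import all_boot.
Set Implicit Arguments. Unset Strict Implicit. Unset Printing Implicit Defensive.

(* A bi-hypergraph (X, B) with X = the finite type T and B : {set {set T}}. *)

Section BiHypergraph.
Variable T : finType.

Definition three_uniform (B : {set {set T}}) : Prop :=
  forall e, e \in B -> #|e| = 3.

Definition strict_coloring (B : {set {set T}}) (k : nat) (P : {set {set T}}) : bool :=
  [&& partition P [set: T], #|P| == k &
   [forall e in B,
     [exists x in e, exists y in e, (x != y) && (pblock P x == pblock P y)] &&
     [exists x in e, exists y in e, pblock P x != pblock P y]]].

Definition num_strict (B : {set {set T}}) (k : nat) : nat :=
  #|[set P : {set {set T}} | strict_coloring B k P]|.

Definition feasible (B : {set {set T}}) (k : nat) : bool := 0 < num_strict B k.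

Definition one_realization (B : {set {set T}}) (S : pred nat) : Prop :=
  (forall k, feasible B k = S k) /\ (forall k, num_strict B k <= 1).

End BiHypergraph.

(* Main.v *)
Require Import Defs.
From mathcomp Require Import all_boot zify.
Set Implicit Arguments. Unset Strict Implicit. Unset Printing Implicit Defensive.

Section Gen.
Variable T : finType.

Definition fpart (rT : finType) (f : T -> rT) := preim_partition f [set: T].

Lemma fpart_partition (rT : finType) (f : T -> rT) : partition (fpart f) [set: T].
Proof. exact: preim_partitionP. Qed.

Lemma fpart_pblock (rT : finType) (f : T -> rT) x y :
  (pblock (fpart f) x == pblock (fpart f) y) = (f x == f y).
Proof.
have /and3P[/eqP cov tiP _] := fpart_partition f.
rewrite eq_pblock // ?cov ?inE //.
rewrite (@pblock_equivalence_partition _ (fun x y => f x == f y)) ?inE //.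
by move=> a b c _ _ _; split=> // /eqP ->.
Qed.

Lemma fpart_card (rT : finType) (f : T -> rT) : #|fpart f| = #|f @: [set: T]|.
Proof.
pose fib v := [set y | f y == v].
have -> : fpart f = fib @: (f @: [set: T]).
  rewrite /fpart /preim_partition /equivalence_partition -imset_comp.
  apply: eq_imset => x; apply/setP => y; rewrite !inE /=; exact: eq_sym.
rewrite card_in_imset // => u v /imsetP[x _ ->] _ /setP /(_ x).
by rewrite !inE eqxx => /esym /eqP.
Qed.

Lemma fpart_strict (rT : finType) (f : T -> rT) (B : {set {set T}}) k :
  k = #|f @: [set: T]| ->
  (forall e, e \in B ->
     (exists x y, [/\ x \in e, y \in e, x != y & f x = f y]) /\
     (exists x y, [/\ x \in e, y \in e & f x != f y])) ->
  strict_coloring B k (fpart f).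
Proof.
move=> -> H; rewrite /strict_coloring fpart_partition fpart_card eqxx /=.
apply/forall_inP => e /H [[x [y [xe ye xy fxy]]] [u [v [ue ve fuv]]]].
apply/andP; split.
  apply/existsP; exists x; rewrite xe /=; apply/existsP; exists y.
  by rewrite ye xy fpart_pblock fxy eqxx.
apply/existsP; exists u; rewrite ue /=; apply/existsP; exists v.
by rewrite ve fpart_pblock.
Qed.

Lemma num_strict_uniq (B : {set {set T}}) k P1 P2 :
  num_strict B k <= 1 -> strict_coloring B k P1 -> strict_coloring B k P2 -> P1 = P2.
Proof.
move=> /card_le1_eqP H h1 h2; apply: H; by rewrite inE.
Qed.

Lemma strict_feasible (B : {set {set T}}) k P :
  strict_coloring B k P -> feasible B k.
Proof. by move=> h; rewrite /feasible /num_strict; apply/card_gt0P; exists P; rewrite inE. Qed.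

End Gen.

Section Main.
Variables (T : finType) (B : {set {set T}}) (P : {set {set T}}) (n1 : nat).
Hypothesis hB : three_uniform B.
Hypothesis hP : strict_coloring B n1 P.
Hypothesis huniq : forall k, num_strict B k <= 1.

Let f0 := pblock P.

Lemma hpart : partition P [set: T].
Proof. by case/and3P: hP. Qed.

Lemma hcardP : #|P| = n1.
Proof. by case/and3P: hP => _ /eqP. Qed.

Lemma hedges e : e \in B ->
     (exists x y, [/\ x \in e, y \in e, x != y & f0 x = f0 y]) /\
     (exists x y, [/\ x \in e, y \in e & f0 x != f0 y]).
Proof.
case/and3P: hP => _ _ /forall_inP H /H /andP[/existsP[x /andP[xe /existsP[y /andP[ye /andP[xy /eqP fxy]]]]]].
move=> /existsP[u /andP[ue /existsP[v /andP[ve fuv]]]].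
by split; [exists x, y | exists u, v].
Qed.

Lemma inP_pblock C x : C \in P -> (f0 x == C) = (x \in C).
Proof.
have /and3P[/eqP cov tiP _] := hpart.
move=> PC; apply/eqP/idP => [<-|xC]; last by rewrite /f0 (def_pblock tiP PC xC).
by rewrite /f0 mem_pblock cov inE.
Qed.

Lemma f0_mem x : f0 x \in P.
Proof. have /and3P[/eqP cov _ _] := hpart. by apply: pblock_mem; rewrite cov inE. Qed.

Lemma nonempty C : C \in P -> exists x, x \in C.
Proof.
have /and3P[_ _ n0] := hpart.
move=> PC; have : C != set0 by apply: contraNneq n0 => <-.
by case/set0Pn => x xC; exists x.
Qed.

Lemma f0_image : f0 @: [set: T] = P.
Proof.
apply/setP => C; apply/imsetP/idP => [[x _ ->]|PC]; first exact: f0_mem.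
have [x xC] := nonempty PC; exists x => //; apply/esym/eqP; by rewrite inP_pblock.
Qed.

Section Merge.
Variables (A Cc : {set T}).
Hypotheses (PA : A \in P) (PC : Cc \in P) (AC : A != Cc).
Hypothesis noedge : forall e, e \in B -> ~~ (e \subset A :|: Cc).

Definition gm x := if f0 x == Cc then A else f0 x.

Lemma gm_image : gm @: [set: T] = P :\ Cc.
Proof.
apply/setP => D; rewrite !inE; apply/imsetP/idP => [[x _ ->]|/andP[DC PD]].
  rewrite /gm; case: ifP => [_|/negbT h]; first by rewrite PA andbT; apply: contraNneq AC => ->.
  by rewrite h f0_mem.
have [x xD] := nonempty PD; exists x => //.
have /eqP fx : f0 x == D by rewrite inP_pblock.
by rewrite /gm fx (negbTE DC).
Qed.

Lemma merge_strict : strict_coloring B n1.-1 (fpart gm).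
Proof.
apply: fpart_strict; first by rewrite gm_image -hcardP (cardsD1 Cc P) PC.
move=> e eB; have [[x [y [xe ye xy fxy]]] [u [v [ue ve fuv]]]] := hedges eB.
split; first by exists x, y; split=> //; rewrite /gm fxy.
have [h|h] := eqVneq (gm u) (gm v); last by exists u, v.
have /subsetPn [z ze zn] := noedge eB.
have [h2|h2] := eqVneq (gm z) (gm u); last by exists z, u.
exfalso; move: zn; rewrite inE negb_or -!inP_pblock // => /andP[zA zC].
have gz : gm z = f0 z by rewrite /gm (negbTE zC).
move: h2 h; rewrite gz /gm.
case: eqP => [_ |/eqP uC]; first by move=> h1; move: zA; rewrite h1 eqxx.
case: eqP => [_ |/eqP vC]; first by move=> h1 h3; move: zA; rewrite h1 h3 eqxx.
by move=> h1 h3; move: fuv; rewrite h3 eqxx.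
Qed.

End Merge.

Lemma single_noedge (A Cc : {set T}) : #|A| = 1 -> #|Cc| = 1 ->
  forall e, e \in B -> ~~ (e \subset A :|: Cc).
Proof.
move=> hA hC e eB; apply/negP => /subset_leq_card.
rewrite (hB eB) => h; have := leq_card_setU A Cc; rewrite hA hC; move: h; move=> h1 h2; by have := leq_trans h1 h2.
Qed.


Lemma mem_self x : x \in f0 x.
Proof. have /and3P[/eqP cov _ _] := hpart. by rewrite /f0 mem_pblock cov inE. Qed.

Lemma f0_eq x y : y \in f0 x -> f0 y = f0 x.
Proof. move=> h; apply/eqP; by rewrite inP_pblock ?f0_mem. Qed.

Section Two.
Variable a : T.
Hypothesis ha : #|f0 a| = 1.
Hypothesis hle2 : forall C, C \in P -> #|C| <= 2.
Variable D : {set T}.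
Hypotheses (PD : D \in P) (cD : #|D| = 2).

Definition rep x := odflt a [pick y in f0 x].

Lemma rep_in x : rep x \in f0 x.
Proof.
rewrite /rep; case: pickP => [y hy|none] //=.
by have := none x; rewrite /= mem_self.
Qed.

Lemma fa_single y : y \in f0 a -> y = a.
Proof.
move=> h; have : #|f0 a| <= 1 by rewrite ha.
by move/card_le1_eqP => /(_ y a h (mem_self a)).
Qed.

Lemma nota x y : x != y -> f0 x = f0 y -> x != a.
Proof.
move=> xy fxy; apply/negP => /eqP xa; subst x.
have := mem_self y; rewrite -fxy => /fa_single ya.
by move: xy; rewrite ya eqxx.
Qed.

Definition col (b : bool) x := if x == a then b else (x == rep x).

Lemma pair_split x y : x != y -> f0 x = f0 y -> col true x != col true y /\
   forall b, col b x = col true x /\ col b y = col true y.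
Proof.
move=> xy fxy; have xa := nota xy fxy.
have ya : y != a by apply: (nota (y:=x)); rewrite // eq_sym.
rewrite /col (negbTE xa) (negbTE ya); split => // .
have ry : rep y = rep x by rewrite /rep fxy.
rewrite ry; have rx := rep_in x.
have : (rep x == x) || (rep x == y).
  have [h1|h1] := eqVneq (rep x) x; first by []. have [h2|h2] := eqVneq (rep x) y; first by rewrite orbT. exfalso.
  have : 2 < #|f0 x|.
    apply/card_gt2P; exists x, y, (rep x); split; first by split; [exact: mem_self | rewrite fxy; exact: mem_self | exact: rx].
    by split => //; rewrite ?h1 // eq_sym.
  by rewrite ltnNge hle2 ?f0_mem.
case/orP => /eqP ->; first by rewrite eqxx (eq_sym y x) xy.
by rewrite eqxx (negbTE xy).
Qed.

Lemma pairD : exists r s, [/\ s != r, f0 s = f0 r, col true r & forall b, col b r].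
Proof.
have /card_gt1P [u [v [uD vD uv]]] : 1 < #|D| by rewrite cD.
have fu : f0 u = D by apply/eqP; rewrite inP_pblock.
have fv : f0 v = D by apply/eqP; rewrite inP_pblock.
have fuv : f0 u = f0 v by rewrite fu fv.
have [h1 h2] := pair_split uv fuv.
case: (h2 true) => _ _.
move: h1; case hu: (col true u) => /= h1.
  exists u, v; split => //; first by rewrite eq_sym.
  by move=> b; case: (h2 b) => -> _.
exists v, u; split => //.
  by move: h1; case: (col true v).
move=> b; case: (h2 b) => _ ->; by move: h1; case: (col true v).
Qed.

Lemma col_strict b : strict_coloring B 2 (fpart (col b)).
Proof.
have [r [s [sr fsr cr cbr]]] := pairD.
apply: fpart_strict.
  have -> : col b @: [set: T] = [set: bool].
    apply/setP => c; rewrite inE; apply/imsetP.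
    case: c; first by exists r => //; rewrite cbr.
    exists s => //; have [h1 h2] := pair_split sr fsr.
    case: (h2 b) => -> _; by move: h1 cr; case: (col true s); case: (col true r).
  by rewrite cardsT card_bool.
move=> e eB; have [[x [y [xe ye xy fxy]]] _] := hedges eB.
split; last first.
  exists x, y; split => //; have [h1 h2] := pair_split xy fxy.
  by case: (h2 b) => -> ->.
have /card_gt2P [u [v [w [[ue ve we] [uv vw wu]]]]] : 2 < #|e| by rewrite (hB eB).
have [h|h] := eqVneq (col b u) (col b v); first by exists u, v; split.
have [h'|h'] := eqVneq (col b w) (col b u); first by exists w, u; split => //; rewrite eq_sym.
exists v, w; split => //.
by move: h h'; case: (col b u); case: (col b v); case: (col b w).
Qed.

Lemma two_contra : False.
Proof.
have [r [s [sr fsr cr cbr]]] := pairD.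
have ra : r != a by apply/negP => /eqP ra; have := cbr false; rewrite /col ra eqxx.
have := num_strict_uniq (huniq 2) (col_strict true) (col_strict false).
move=> /(congr1 (fun Q => pblock Q a == pblock Q r)); rewrite !fpart_pblock.
move: cr; rewrite /col eqxx (negbTE ra) => -> //.
Qed.

End Two.

Definition S1 := [set C in P | #|C| == 1].

Lemma s1_le2 : #|S1| <= 2.
Proof.
rewrite leqNgt; apply/negP => /card_gt2P [A [C1 [C2 [[hA h1 h2] [d1 d2 d3]]]]].
move: hA h1 h2; rewrite !inE => /andP[PA /eqP cA] /andP[P1 /eqP c1] /andP[P2 /eqP c2].
have m1 := merge_strict PA P1 d1 (single_noedge cA c1).
have d3' : A != C2 by rewrite eq_sym.
have m2 := merge_strict PA P2 d3' (single_noedge cA c2).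
have := num_strict_uniq (huniq _) m1 m2.
have [a aA] := nonempty PA; have [b bC] := nonempty P1.
move=> /(congr1 (fun Q => pblock Q a == pblock Q b)); rewrite !fpart_pblock.
have fa : f0 a = A by apply/eqP; rewrite inP_pblock.
have fb : f0 b = C1 by apply/eqP; rewrite inP_pblock.
rewrite /gm fa fb eqxx (negbTE d1) (eq_sym A C2) (negbTE d3) eqxx.
by rewrite eq_sym (negbTE d2) eq_sym (negbTE d1).
Qed.

Lemma s1_2 : 1 < #|S1| -> feasible B n1.-1.
Proof.
move=> /card_gt1P [A [C1 [hA h1 d]]].
move: hA h1; rewrite !inE => /andP[PA /eqP cA] /andP[P1 /eqP c1].
exact: strict_feasible (merge_strict PA P1 d (single_noedge cA c1)).
Qed.


Lemma cardT_sum : #|T| = \sum_(C in P) #|C|.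
Proof. by rewrite -cardsT (card_partition hpart). Qed.

Lemma sum_bound0 : (forall C, C \in P -> 1 < #|C|) -> 2 * n1 <= #|T|.
Proof.
move=> h; rewrite cardT_sum -hcardP mulnC -sum_nat_const.
by apply: leq_sum => C /h.
Qed.

Lemma card_pos C : C \in P -> 0 < #|C|.
Proof. by move/nonempty => [x xC]; apply/card_gt0P; exists x. Qed.

Lemma sum_bound L : L \in P -> 2 < #|L| -> 2 * n1 + 1 <= #|T| + #|S1|.
Proof.
move=> PL cL.
have h1 : \sum_(C in P) (2 + (C == L)) <= \sum_(C in P) (#|C| + (#|C| == 1)).
  apply: leq_sum => C PC; have := card_pos PC.
  case: eqP => [-> _|_]; first by rewrite (_ : (#|L| == 1) = false) ?addn0 //; apply/negbTE; rewrite neq_ltn; apply/orP; right; exact: ltnW.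
  by case: eqP => [->|/eqP h] //= p; lia.
move: h1; rewrite !big_split /= sum_nat_const hcardP (bigD1 L) //= eqxx big1; last first.
  by move=> C /andP[_ /negbTE ->].
rewrite -cardT_sum.
have -> : \sum_(C in P) (#|C| == 1 : nat) = #|S1|.
  rewrite -sum1_card [RHS]big_mkcond [LHS]big_mkcond /=; apply: eq_bigr => C _.
  by rewrite !inE; case: (C \in P); case: (_ == 1).
by rewrite mulnC addn0.
Qed.

Hypothesis n1ge3 : 3 <= n1.

Lemma exists_big : (exists A, A \in P /\ #|A| = 1) -> exists L, L \in P /\ 2 < #|L|.
Proof.
move=> [A [PA cA]].
case: (boolP [exists L in P, 2 < #|L|]) => [/exists_inP [L PL cL]|/exists_inP hn].
  by exists L.
exfalso.
have hle2 C : C \in P -> #|C| <= 2.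
  by move=> PC; rewrite leqNgt; apply/negP => cC; apply: hn; exists C.
have : 0 < #|P :\: S1|.
  have := cardsD P S1; have -> : P :&: S1 = S1.
    by apply/setIidPr/subsetP => C; rewrite inE => /andP[].
  have := s1_le2; rewrite hcardP => h1 ->; lia.
case/card_gt0P => D; rewrite !inE => /andP[nS PD].
have cD : #|D| = 2.
  have := hle2 D PD; have := card_pos PD; move: nS; rewrite PD /=; lia.
have [a aA] := nonempty PA.
have fa : f0 a = A by apply/eqP; rewrite inP_pblock.
apply: (two_contra (a := a) _ hle2 PD cD); by rewrite fa.
Qed.

End Main.

(* S = {n_1, ..., n_s} given as the sequence ns = [:: n_1; ...; n_s]. *)
Theorem lemma2p1 (ns : seq nat) (T : finType) (B : {set {set T}}) :
  2 <= size ns ->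
  sorted (fun a b => b < a) ns ->
  all (fun a => 2 <= a) ns ->
  three_uniform B ->
  one_realization B (fun k => k \in ns) ->
  2 * nth 0 ns 0 - (nth 0 ns 1 + 1) %/ nth 0 ns 0 <= #|T|.
Proof.
move=> hsz hsort hall hB [hfeas huniq].
case: ns hsz hsort hall hfeas => [|x0 [|x1 rest]] //= _ hsort hall hfeas.
move: hall => /and3P [h0 h1 _].
move: hsort => /andP [x10 hpath].
have := hfeas x0; rewrite inE eqxx /= => /card_gt0P [P]; rewrite inE => hP.
have n1ge3 : 3 <= x0 by lia.
case: (boolP [exists C in P, #|C| == 1]) => [/exists_inP [A PA /eqP cA]|/exists_inP hn].
  have [L [PL cL]] := exists_big hB hP huniq n1ge3 (ex_intro _ A (conj PA cA)).
  have hs := sum_bound hP PL cL.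
  have hle := s1_le2 hB hP huniq.
  case: (leqP #|S1 P| 1) => hs1.
    apply: leq_trans (leq_subr _ _) _; move: hs hs1; set m := #|S1 P|; set t := #|T|; lia.
  have := hfeas x0.-1; rewrite (s1_2 hB hP hs1) => /esym.
  rewrite !inE => /orP [/eqP|/orP [/eqP e1|hr]]; first by lia.
    rewrite -e1 addn1 prednK ?divnn; last by lia.
    have -> : (0 < x0) = true by lia.
    move: hs hle; set m := #|S1 P|; set t := #|T|; lia.
  have : all (fun b => b < x1) rest.
    apply: (order_path_min (leT := fun a b => b < a)) hpath.
    by move=> a b c hab hbc; apply: ltn_trans hbc hab.
  by move=> /allP /(_ _ hr); lia.
have hge : forall C, C \in P -> 1 < #|C|.
  move=> C PC; have := card_pos hP PC.
  case: (leqP #|C| 1) => // c1 c0; exfalso; apply: hn; exists C => //; lia.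
exact: leq_trans (leq_subr _ _) (sum_bound0 hP hge).
Qed.
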